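(* Let $(\varepsilon,\delta)\in\{-1,0,1\}^2$ and $\phi=(\phi_1,\phi_2,\phi_3)\in I_\delta^3$. Define $u_i=-\int_{r_i}^\infty\frac{dt}{\tau_{\varepsilon\delta}(t)}$ for $i=1,2,3$. Then the image $u(\mathcal{M}_{\varepsilon,\delta}(\phi_1,\phi_2,\phi_3))\subset\mathbb{R}^3$ is an open convex polyhedron in each of the following cases: (i) $\varepsilon=-1$; (ii) $(\varepsilon,\delta)=(1,1)$ and $\phi_i\in[\pi/2,\pi]$ for $i=1,2,3$.
   Context: Generalized hyperbolic triangles (in $\mathbb{H}^2$) are convex regions bounded by three geodesics (forming a Euclidean triangle in the Klein model) truncated by common perpendiculars at vertices outside $\overline{\mathbb{H}^2}$, with horodisks at ideal vertices; a generalized vertex has type $1$ (in $\mathbb{H}^2$), $0$ (ideal) or $-1$ (hyperideal). Generalized angle: interior angle (type 1), twice the horocyclic arc length between the sides (type 0), distance between the two sides (type $-1$). Generalized edge length between generalized vertices $u,v$: with $B_u$ the point, the horodisk, or the half-plane beyond the truncating perpendicular, it is $d(B_u,B_v)$ if these are disjoint and minus the distance between the points where $\partial B_u,\partial B_v$ meet the side otherwise. $I_\delta=\mathbb{R}_{>0}$ for $\delta\in\{0,-1\}$, $(0,\pi]$ for $\delta=1$; $J_\sigma=\mathbb{R}_{>0}$ for $\sigma=\pm1$, $J_0=\mathbb{R}$; $\tau_s(t)=\frac12e^t-\frac12se^{-t}$. For $r_i,r_j\in J_{\varepsilon\delta}$ and $\phi_k\in I_\delta$, $l_k$ denotes the generalized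 length of the third side of a generalized triangle of type $(\varepsilon,\varepsilon,\delta)$ whose two sides at the type-$\delta$ vertex have lengths $r_i,r_j$ and generalized angle $\phi_k$ between them, when such a triangle exists (when $\delta=1,\phi_k=\pi$, $l_k=r_i+r_j$). $\mathcal{M}_{\varepsilon,\delta}(\phi_1,\phi_2,\phi_3)$ is the set of $(r_1,r_2,r_3)\in(J_{\varepsilon\delta})^3$ such that $l_1,l_2,l_3$ are all defined (for $\{i,j,k\}=\{1,2,3\}$, using $r_i,r_j,\phi_k$) and there exists a generalized triangle of type $(\varepsilon,\varepsilon,\varepsilon)$ with edge lengths $l_1,l_2,l_3$. *)

(* Defs.v *)
From Stdlib Require Export Reals List.
Open Scope R_scope.

Record V3 := mkV { vx : R; vy : R; vz : R }.

Definition mink (a b : V3) : R := vx a * vx b + vy a * vy b - vz a * vz b.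
Definition vadd (a b : V3) : V3 := mkV (vx a + vx b) (vy a + vy b) (vz a + vz b).
Definition vscal (c : R) (a : V3) : V3 := mkV (c * vx a) (c * vy a) (c * vz a).
Definition vsub (a b : V3) : V3 := vadd a (vscal (-1) b).
Definition det3 (a b c : V3) : R :=
  vx a * (vy b * vz c - vz b * vy c)
  - vy a * (vx b * vz c - vz b * vx c)
  + vz a * (vx b * vy c - vy b * vx c).
Definition dot3 (a b : V3) : R := vx a * vx b + vy a * vy b + vz a * vz b.

Definition tau (s t : R) : R := / 2 * exp t - / 2 * s * exp (- t).

(* vertex types: 1 = point of H^2, 0 = ideal, -1 = hyperideal *)
Definition is_type (e : R) : Prop := e = -1 \/ e = 0 \/ e = 1.

(* Normalized representative of a generalized vertex of type e:
   e = 1 : point of the upper sheet  <v,v> = -1, vz > 0;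
   e = 0 : future light-like vector v; its horodisk is
           B_v = {x in H^2 | -<x,v> <= 1/2};
   e = -1: unit space-like v with vz > 0 (Klein point [v] outside the disk);
           truncating line v^perp, half-plane B_v = {x | <x,v> >= 0}
           (the side containing the hyperideal vertex [v]). *)
Definition normed (e : R) (v : V3) : Prop := mink v v = - e /\ 0 < vz v.

(* the open Klein segment between [v] and [w] meets the open disk *)
Definition edge_ok (v w : V3) : Prop :=
  exists a b, 0 < a /\ 0 < b /\
    mink (vadd (vscal a v) (vscal b w)) (vadd (vscal a v) (vscal b w)) < 0.

(* a point vertex is not cut off by the truncation at a hyperideal vertex *)
Definition trunc_ok (e : R) (v : V3) (e' : R) (w : V3) : Prop :=
  e = -1 -> e' = 1 -> mink v w < 0.

Definition gtri (e1 e2 e3 : R) (v1 v2 v3 : V3) : Prop :=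
  is_type e1 /\ is_type e2 /\ is_type e3 /\
  normed e1 v1 /\ normed e2 v2 /\ normed e3 v3 /\
  det3 v1 v2 v3 <> 0 /\
  edge_ok v1 v2 /\ edge_ok v1 v3 /\ edge_ok v2 v3 /\
  trunc_ok e1 v1 e2 v2 /\ trunc_ok e2 v2 e1 v1 /\
  trunc_ok e1 v1 e3 v3 /\ trunc_ok e3 v3 e1 v1 /\
  trunc_ok e2 v2 e3 v3 /\ trunc_ok e3 v3 e2 v2.

Definition gen_len (a b : R) (v w : V3) (l : R) : Prop :=
  (a * b = 1 -> 0 <= l) /\ tau (- (a * b)) l = - mink v w.

Definition gen_angle (d : R) (vk vi vj : V3) (phi : R) : Prop :=
  (d = 1 ->
     (* interior angle between the tangent directions toward vi, vj *)
     let ui := vadd vi (vscal (mink vi vk) vk) in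
     let uj := vadd vj (vscal (mink vj vk) vk) in
     0 <= phi <= PI /\ cos phi * sqrt (mink ui ui * mink uj uj) = mink ui uj) /\
  (d = 0 ->
     (* twice the horocyclic arc length on the horocycle <x,vk> = -1/2
        between its intersection points hi, hj with the two sides *)
     exists ai bi aj bj,
       let hi := vadd (vscal ai vk) (vscal bi vi) in
       let hj := vadd (vscal aj vk) (vscal bj vj) in
       mink hi hi = -1 /\ 0 < vz hi /\ mink hi vk = - / 2 /\
       mink hj hj = -1 /\ 0 < vz hj /\ mink hj vk = - / 2 /\
       phi = 2 * sqrt (mink (vsub hi hj) (vsub hi hj))) /\
  (d = -1 ->
     (* distance along the truncating line vk^perp between the two sides *)
     exists ai bi aj bj,
       let fi := vadd (vscal ai vk) (vscal bi vi) in
       let fj := vadd (vscal aj vk) (vscal bj vj) in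
       mink fi fi = -1 /\ 0 < vz fi /\ mink fi vk = 0 /\
       mink fj fj = -1 /\ 0 < vz fj /\ mink fj vk = 0 /\
       0 <= phi /\ cosh phi = - mink fi fj).

Definition inI (d phi : R) : Prop := 0 < phi /\ (d = 1 -> phi <= PI).
Definition inJ (s r : R) : Prop := s <> 0 -> 0 < r.

Definition third_len (eps delta ri rj phi l : R) : Prop :=
  (delta = 1 /\ phi = PI /\ l = ri + rj) \/
  exists a b c : V3,
    gtri eps eps delta a b c /\
    gen_len eps delta a c ri /\ gen_len eps delta b c rj /\
    gen_angle delta c a b phi /\ gen_len eps eps a b l.

Definition Mset (eps delta phi1 phi2 phi3 r1 r2 r3 : R) : Prop :=
  inJ (eps * delta) r1 /\ inJ (eps * delta) r2 /\ inJ (eps * delta) r3 /\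
  exists l1 l2 l3,
    third_len eps delta r2 r3 phi1 l1 /\
    third_len eps delta r1 r3 phi2 l2 /\
    third_len eps delta r1 r2 phi3 l3 /\
    exists v1 v2 v3 : V3,
      gtri eps eps eps v1 v2 v3 /\
      gen_len eps eps v2 v3 l1 /\ gen_len eps eps v1 v3 l2 /\ gen_len eps eps v1 v2 l3.

Definition improper_int (f : R -> R) (a L : R) : Prop :=
  (forall b, a <= b -> inhabited (Riemann_integrable f a b)) /\
  forall eta, 0 < eta -> exists B, forall b (pr : Riemann_integrable f a b),
    B <= b -> Rabs (RiemannInt pr - L) < eta.

Definition u_coord (eps delta r y : R) : Prop :=
  improper_int (fun t => / tau (eps * delta) t) r (- y).

Definition u_image (eps delta phi1 phi2 phi3 : R) (y : V3) : Prop :=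
  exists r1 r2 r3, Mset eps delta phi1 phi2 phi3 r1 r2 r3 /\
    u_coord eps delta r1 (vx y) /\ u_coord eps delta r2 (vy y) /\
    u_coord eps delta r3 (vz y).

Definition open_convex_polyhedron (S : V3 -> Prop) : Prop :=
  exists hs : list (V3 * R),
    forall y, S y <-> Forall (fun h => dot3 (fst h) y < snd h) hs.

(* Main.v *)
Require Import Defs.
From Stdlib Require Import Reals List Lra Psatz.
From Coquelicot Require Import Coquelicot.
Open Scope R_scope.

Lemma imp_unique f a L1 L2 : improper_int f a L1 -> improper_int f a L2 -> L1 = L2.
Proof.
  intros [Hi1 H1] [_ H2].
  destruct (Req_dec L1 L2) as [e|ne]; [exact e|exfalso].
  assert (Hd : 0 < Rabs (L1 - L2) / 2).
  { apply Rdiv_lt_0_compat; [apply Rabs_pos_lt; lra | lra]. }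
  destruct (H1 _ Hd) as [B1 HB1]. destruct (H2 _ Hd) as [B2 HB2].
  set (b := Rmax a (Rmax B1 B2)).
  assert (hab : a <= b) by apply Rmax_l.
  assert (hb1 : B1 <= b) by (unfold b; eapply Rle_trans; [apply Rmax_l|apply Rmax_r]).
  assert (hb2 : B2 <= b) by (unfold b; eapply Rle_trans; [apply Rmax_r|apply Rmax_r]).
  destruct (Hi1 b hab) as [pr].
  specialize (HB1 b pr hb1). specialize (HB2 b pr hb2).
  assert (Rabs (L1 - L2) <= Rabs (RiemannInt pr - L1) + Rabs (RiemannInt pr - L2)).
  { replace (L1 - L2) with (-(RiemannInt pr - L1) + (RiemannInt pr - L2)) by ring.
    eapply Rle_trans; [apply Rabs_triang|]. rewrite Rabs_Ropp. lra. }
  lra.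
Qed.

Lemma imp_exists f F a L :
  (forall x, a <= x -> is_derive F x (f x)) ->
  (forall x, a <= x -> continuous f x) ->
  (forall eta, 0 < eta -> exists B, forall b, B <= b -> Rabs (F b - L) < eta) ->
  improper_int f a (L - F a).
Proof.
  intros Hd Hc Hl.
  assert (HI : forall b, a <= b -> is_RInt f a b (F b - F a)).
  { intros b hb. apply (is_RInt_derive F f a b).
    - intros x hx. apply Hd. rewrite Rmin_left in hx by lra. lra.
    - intros x hx. apply Hc. rewrite Rmin_left in hx by lra. lra. }
  split.
  - intros b hb. constructor. apply ex_RInt_Reals_0. eexists. apply HI. exact hb.
  - intros eta he. destruct (Hl eta he) as [B HB]. exists (Rmax a B).
    intros b pr hb.
    assert (hab : a <= b) by (eapply Rle_trans; [apply Rmax_l|exact hb]).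
    assert (hBb : B <= b) by (eapply Rle_trans; [apply Rmax_r|exact hb]).
    rewrite <- RInt_Reals. rewrite (is_RInt_unique f a b _ (HI b hab)).
    replace (F b - F a - (L - F a)) with (F b - L) by ring. apply HB. exact hBb.
Qed.

Definition Ch r := / 2 * exp r + / 2 * exp (- r).
Definition Sh r := / 2 * exp r - / 2 * exp (- r).

Lemma exp_m r : exp (- r) = / exp r.
Proof. apply exp_Ropp. Qed.

Lemma exp_le' x y : x <= y -> exp x <= exp y.
Proof. intros h; destruct h as [h|h]; [left; apply exp_increasing; exact h| subst; lra]. Qed.

Lemma tau_m1 r : tau (-1) r = Ch r. Proof. unfold tau, Ch. ring. Qed.
Lemma tau_1 r : tau 1 r = Sh r. Proof. unfold tau, Sh. ring. Qed.
Lemma tau_0 r : tau 0 r = / 2 * exp r. Proof. unfold tau. ring. Qed.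

Lemma ChSh r : Ch r * Ch r - Sh r * Sh r = 1.
Proof. unfold Ch, Sh. rewrite exp_m. assert (exp r > 0) by apply exp_pos. field. lra. Qed.

Lemma Ch_pos r : 0 < Ch r.
Proof. unfold Ch. pose proof (exp_pos r). pose proof (exp_pos (-r)). lra. Qed.

Lemma Ch_ge1 r : 1 <= Ch r.
Proof. unfold Ch. rewrite exp_m. pose proof (exp_pos r) as h.
  set (E := exp r) in *.
  assert (/2 * E + /2 * /E - 1 = (E - 1)*(E-1) / (2*E)) by (field; lra).
  assert (0 <= (E - 1)*(E-1) / (2*E)).
  { apply Rle_mult_inv_pos. apply Rle_0_sqr. lra. } lra. Qed.

Lemma Sh_pos r : 0 < r -> 0 < Sh r.
Proof. intros h. unfold Sh. pose proof (exp_increasing (-r) r ltac:(lra)). lra. Qed.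

Lemma Sh_nonneg r : 0 <= r -> 0 <= Sh r.
Proof. intros h; destruct h as [h|h]. apply Rlt_le, Sh_pos; auto. subst. unfold Sh. rewrite Ropp_0. lra. Qed.

Lemma Ch_gt1 r : 0 < r -> 1 < Ch r.
Proof. intros h. pose proof (ChSh r). pose proof (Sh_pos r h). pose proof (Ch_pos r). nra. Qed.

Lemma Ch_add x y : Ch (x + y) = Ch x * Ch y + Sh x * Sh y.
Proof. unfold Ch, Sh. rewrite Ropp_plus_distr, !exp_plus. field. Qed.
Lemma Sh_add x y : Sh (x + y) = Sh x * Ch y + Ch x * Sh y.
Proof. unfold Ch, Sh. rewrite Ropp_plus_distr, !exp_plus. field. Qed.
Lemma Ch_opp x : Ch (- x) = Ch x.
Proof. unfold Ch. rewrite Ropp_involutive. ring. Qed.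

Lemma Ch_lt x y : 0 <= x -> x < y -> Ch x < Ch y.
Proof. intros hx hxy. replace y with (x + (y - x)) by ring. rewrite Ch_add.
  assert (1 < Ch (y - x)) by (apply Ch_gt1; lra).
  assert (0 < Sh (y - x)) by (apply Sh_pos; lra).
  pose proof (Sh_nonneg x hx). pose proof (Ch_pos x). nra. Qed.

Lemma Ch_le_inv x y : 0 <= x -> 0 <= y -> Ch x <= Ch y -> x <= y.
Proof. intros hx hy h. destruct (Rle_or_lt x y) as [|hl]; auto.
  pose proof (Ch_lt y x hy hl). lra. Qed.
Lemma Ch_lt_inv x y : 0 <= x -> 0 <= y -> Ch x < Ch y -> x < y.
Proof. intros hx hy h. destruct (Rlt_or_le x y) as [|hl]; auto.
  destruct hl as [hl|hl]. pose proof (Ch_lt y x hy hl). lra. subst; lra. Qed.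

Lemma cosh_Ch x : cosh x = Ch x.
Proof. unfold cosh, Ch. field. Qed.

Lemma acosh_ex x : 1 <= x -> exists l, 0 <= l /\ Ch l = x.
Proof.
  intros hx. set (q := sqrt (x * x - 1)).
  assert (hq : 0 <= q) by apply sqrt_pos.
  assert (hq2 : q * q = x * x - 1) by (apply sqrt_sqrt; nra).
  exists (ln (x + q)). split.
  - rewrite <- ln_1. apply ln_le; lra.
  - unfold Ch. rewrite exp_m, exp_ln by lra.
    assert (H : / (x + q) = x - q).
    { apply Rmult_eq_reg_l with (x + q); [|lra]. rewrite Rinv_r by lra. nra. }
    rewrite H. lra.
Qed.

Definition G1 r := ln ((exp r - 1) / (exp r + 1)).
Definition G0 r := -2 * exp (- r).
Definition Gm r := -2 * atan (exp (- r)).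

Lemma exp_gt1 x : 0 < x -> 1 < exp x.
Proof. intros h. rewrite <- exp_0. apply exp_increasing. exact h. Qed.

Lemma ln_1px x : 0 < x -> ln (1 + x) < x.
Proof. intros h. rewrite <- (ln_exp x) at 2. apply ln_increasing. lra. apply exp_ineq1. lra. Qed.

Lemma der_G1 x : 0 < x -> is_derive G1 x (/ tau 1 x).
Proof.
  intros hx. pose proof (exp_gt1 x hx). unfold G1. auto_derive.
  - repeat split; try lra. apply Rdiv_lt_0_compat; lra.
  - rewrite tau_1. unfold Sh. rewrite exp_m. field. repeat split; nra.
Qed.

Lemma lim_G1 eta : 0 < eta -> exists B, forall b, B <= b -> Rabs (G1 b - 0) < eta.
Proof.
  intros he. exists (ln (1 + 2 / eta) + 1). intros b hb.
  assert (h0 : 0 < ln (1 + 2/eta)).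
  { rewrite <- ln_1. apply ln_increasing. lra. assert (0 < 2/eta) by (apply Rdiv_lt_0_compat; lra). lra. }
  assert (hE : 1 + 2/eta < exp b).
  { rewrite <- (exp_ln (1 + 2/eta)) by (assert (0 < 2/eta) by (apply Rdiv_lt_0_compat; lra); lra).
    apply exp_increasing. lra. }
  set (E := exp b) in *.
  assert (hE1 : 1 < E) by (assert (0 < 2/eta) by (apply Rdiv_lt_0_compat; lra); lra).
  unfold G1. fold E.
  assert (hq : (E - 1)/(E + 1) = / (1 + 2/(E - 1))) by (field; lra).
  rewrite hq, ln_Rinv.
  2:{ assert (0 < 2/(E-1)) by (apply Rdiv_lt_0_compat; lra). lra. }
  assert (hp : 0 < 2/(E-1)) by (apply Rdiv_lt_0_compat; lra).
  assert (hl : 0 < ln (1 + 2/(E-1))).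
  { rewrite <- ln_1. apply ln_increasing; lra. }
  rewrite Rminus_0_r, Rabs_Ropp, Rabs_right by lra.
  eapply Rlt_trans. apply ln_1px; lra.
  (* 2/(E-1) < eta *)
  assert (2/eta < E - 1) by lra.
  apply (Rmult_lt_reg_r (E - 1)); [lra|].
  unfold Rdiv. rewrite Rmult_assoc, Rinv_l by lra.
  apply (Rmult_lt_reg_r (/eta)). apply Rinv_0_lt_compat; lra.
  replace (eta * (E - 1) * / eta) with (E - 1) by (field; lra). lra.
Qed.

Lemma uc1 r y : 0 < r ->
  (improper_int (fun t => / tau 1 t) r (- y) <-> y = G1 r).
Proof.
  intros hr.
  assert (HE : improper_int (fun t => / tau 1 t) r (0 - G1 r)).
  { apply imp_exists.
    - intros x hx. apply der_G1. lra.
    - intros x hx. apply ex_derive_continuous. unfold tau. auto_derive.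
      pose proof (exp_increasing (-x) x ltac:(lra)). lra.
    - apply lim_G1. }
  split.
  - intros H. pose proof (imp_unique _ _ _ _ H HE). lra.
  - intros ->. replace (- G1 r) with (0 - G1 r) by ring. exact HE.
Qed.

Lemma lim_G0 eta : 0 < eta -> exists B, forall b, B <= b -> Rabs (G0 b - 0) < eta.
Proof.
  intros he. exists (- ln (eta / 4)). intros b hb.
  assert (h : exp (- b) <= eta / 4).
  { rewrite <- (exp_ln (eta/4)) by lra. apply exp_le'. lra. }
  pose proof (exp_pos (-b)). unfold G0. rewrite Rminus_0_r, Rabs_left by lra. lra.
Qed.

Lemma uc0 r y : (improper_int (fun t => / tau 0 t) r (- y) <-> y = G0 r).
Proof.
  assert (HE : improper_int (fun t => / tau 0 t) r (0 - G0 r)).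
  { apply imp_exists.
    - intros x hx. unfold G0. auto_derive. auto. rewrite tau_0, exp_m.
      pose proof (exp_pos x). field. lra.
    - intros x hx. apply ex_derive_continuous. unfold tau. auto_derive.
      pose proof (exp_pos x). lra.
    - apply lim_G0. }
  split.
  - intros H. pose proof (imp_unique _ _ _ _ H HE). lra.
  - intros ->. replace (- G0 r) with (0 - G0 r) by ring. exact HE.
Qed.

Lemma atan_pos x : 0 < x -> 0 < atan x.
Proof. intros h. rewrite <- atan_0. apply atan_increasing. exact h. Qed.

Lemma lim_Gm eta : 0 < eta -> exists B, forall b, B <= b -> Rabs (Gm b - 0) < eta.
Proof.
  intros he. set (e := Rmin eta 1).
  assert (he1 : 0 < e) by (unfold e; apply Rmin_glb_lt; lra).
  assert (he2 : e <= 1) by apply Rmin_r.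
  assert (he3 : e <= eta) by apply Rmin_l.
  pose proof PI2_1.
  assert (ht : 0 < tan (e / 4)) by (apply tan_gt_0; lra).
  exists (- ln (tan (e / 4))). intros b hb.
  assert (h : exp (- b) <= tan (e / 4)).
  { rewrite <- (exp_ln (tan (e/4))) by lra. apply exp_le'. lra. }
  assert (h2 : atan (exp (- b)) <= e / 4).
  { destruct h as [h|h]. left. rewrite <- (atan_tan (e/4)) by lra. apply atan_increasing. exact h.
    rewrite h, atan_tan by lra. lra. }
  pose proof (atan_pos (exp (-b)) (exp_pos _)).
  unfold Gm. rewrite Rminus_0_r, Rabs_left by lra. lra.
Qed.

Lemma ucm r y : (improper_int (fun t => / tau (-1) t) r (- y) <-> y = Gm r).
Proof.
  assert (HE : improper_int (fun t => / tau (-1) t) r (0 - Gm r)).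
  { apply imp_exists.
    - intros x hx. unfold Gm. auto_derive. auto. rewrite tau_m1. unfold Ch. rewrite exp_m.
      pose proof (exp_pos x). field. nra.
    - intros x hx. apply ex_derive_continuous. unfold tau. auto_derive.
      pose proof (exp_pos x). pose proof (exp_pos (-x)). lra.
    - apply lim_Gm. }
  split.
  - intros H. pose proof (imp_unique _ _ _ _ H HE). lra.
  - intros ->. replace (- Gm r) with (0 - Gm r) by ring. exact HE.
Qed.

Lemma mink_sym a b : mink a b = mink b a.
Proof. unfold mink. ring. Qed.
Lemma mink_addl a b c : mink (vadd a b) c = mink a c + mink b c.
Proof. destruct a, b, c; unfold mink, vadd; simpl. ring. Qed.
Lemma mink_addr a b c : mink c (vadd a b) = mink c a + mink c b.
Proof. destruct a, b, c; unfold mink, vadd; simpl. ring. Qed.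
Lemma mink_scall k a c : mink (vscal k a) c = k * mink a c.
Proof. destruct a, c; unfold mink, vscal; simpl. ring. Qed.
Lemma mink_scalr k a c : mink c (vscal k a) = k * mink c a.
Proof. destruct a, c; unfold mink, vscal; simpl. ring. Qed.
Lemma vsub_e a b : vsub a b = vadd a (vscal (-1) b).
Proof. reflexivity. Qed.

Ltac mexp := repeat (rewrite ?vsub_e, ?mink_addl, ?mink_addr, ?mink_scall, ?mink_scalr).
Ltac mexpH H := repeat (rewrite ?vsub_e, ?mink_addl, ?mink_addr, ?mink_scall, ?mink_scalr in H).

Lemma vz_add a b : vz (vadd a b) = vz a + vz b. Proof. reflexivity. Qed.
Lemma vz_scal k a : vz (vscal k a) = k * vz a. Proof. reflexivity. Qed.

Lemma edge_ok_11 v w : mink v v + 2 * mink v w + mink w w < 0 -> edge_ok v w.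
Proof. intros h. exists 1, 1. split; [lra|split; [lra|]].
  mexp. rewrite (mink_sym w v). lra. Qed.

Lemma edge_hyp a b : normed (-1) a -> normed (-1) b -> edge_ok a b -> mink a b < -1.
Proof.
  intros [ha _] [hb _] [s [t [hs [ht h]]]]. mexpH h. rewrite (mink_sym b a) in h.
  rewrite ha, hb in h. set (m := mink a b) in *.
  destruct (Rlt_or_le m (-1)) as [|hm]; auto. exfalso.
  assert (0 < s * t) by (apply Rmult_lt_0_compat; lra).
  assert (0 <= s * t * (m + 1)) by (apply Rmult_le_pos; lra).
  assert (0 <= (s - t) * (s - t)) by apply Rle_0_sqr. nra.
Qed.

Lemma alg_hyp Ci Si ai bi vc va :
  Ci * Ci - Si * Si = 1 -> 0 < Si -> 0 < Ci -> 0 < vc -> 0 < va ->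
  ai * 1 + bi * (- Ci) = 0 ->
  ai * (ai * 1) + ai * (bi * (- Ci)) + (bi * (ai * (- Ci)) + bi * (bi * 1)) = -1 ->
  0 < ai * vc + bi * va -> bi * Si = 1 /\ ai = bi * Ci.
Proof.
  intros hcs hs hc hvc hva h1 h2 h3.
  assert (ha : ai = bi * Ci) by lra. subst ai.
  assert (hb : 0 < bi).
  { destruct (Rlt_or_le 0 bi) as [|hb]; auto.
    assert (bi * Ci * vc <= 0). { assert (0 <= - bi) by lra. assert (0 <= -bi * Ci * vc) by (apply Rmult_le_pos; [apply Rmult_le_pos|]; lra). lra. }
    assert (bi * va <= 0). { assert (0 <= -bi * va) by (apply Rmult_le_pos; lra). lra. }
    lra. }
  assert (h4 : (bi * Si) * (bi * Si) = 1) by nra.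
  assert (0 < bi * Si) by (apply Rmult_lt_0_compat; lra).
  split; [nra|reflexivity].
Qed.
Definition DA ri rj phi := Ch phi * Sh ri * Sh rj - Ch ri * Ch rj.
Lemma nec_A ri rj phi l : 0 < ri -> 0 < rj ->
  third_len (-1) (-1) ri rj phi l -> 1 < DA ri rj phi.
Proof.
  intros hri hrj [[h _]|[a [b [c [G [La [Lb [An Lab]]]]]]]]; [lra|].
  destruct G as [_ [_ [_ [Na [Nb [Nc [_ [Eab _]]]]]]]].
  pose proof (edge_hyp a b Na Nb Eab) as hab.
  destruct La as [_ La]. destruct Lb as [_ Lb].
  replace (- (-1 * -1)) with (-1) in La, Lb by ring. rewrite tau_m1 in La, Lb.
  destruct An as [_ [_ An]]. destruct (An ltac:(reflexivity)) as [ai [bi [aj [bj H]]]].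
  cbv zeta in H. destruct H as [fii [fiz [fic [fjj [fjz [fjc [hphi hc]]]]]]].
  mexpH fii. mexpH fic. mexpH fjj. mexpH fjc. mexpH hc. rewrite !vz_add, !vz_scal in fiz, fjz.

  assert (hcc : mink c c = 1) by (destruct Nc; lra).
  assert (haa : mink a a = 1) by (destruct Na; lra).
  assert (hbb : mink b b = 1) by (destruct Nb; lra).
  assert (hac : mink a c = - Ch ri) by lra.
  assert (hbc : mink b c = - Ch rj) by lra.
  rewrite (mink_sym c a), (mink_sym c b) in *. rewrite hcc, haa, hbb, hac, hbc in *.
  pose proof (ChSh ri). pose proof (ChSh rj). pose proof (Ch_pos ri). pose proof (Ch_pos rj).
  pose proof (Sh_pos ri hri). pose proof (Sh_pos rj hrj).
  destruct Nc as [_ hvc]. destruct Na as [_ hva]. destruct Nb as [_ hvb].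
  destruct (alg_hyp (Ch ri) (Sh ri) ai bi (vz c) (vz a)) as [hi ->]; auto.
  destruct (alg_hyp (Ch rj) (Sh rj) aj bj (vz c) (vz b)) as [hj ->]; auto.
  rewrite cosh_Ch in hc. set (m := mink a b) in *.
  assert (e : Ch phi * Sh ri * Sh rj = (bi * Sh ri) * (bj * Sh rj) * (Ch ri * Ch rj - m)) by (rewrite hc; ring).
  rewrite hi, hj in e. unfold DA. lra.
Qed.

Lemma sqrt_ge1 z : 1 <= sqrt (1 + z * z).
Proof. apply Rle_trans with (sqrt 1); [rewrite sqrt_1; lra|]. apply sqrt_le_1_alt. pose proof (Rle_0_sqr z). unfold Rsqr in *. lra. Qed.

Lemma det_ne a b c : det3 a b c <> 0 -> det3 a b c <> 0. Proof. auto. Qed.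

Lemma suf_A ri rj phi : 0 < ri -> 0 < rj -> 0 < phi -> 1 < DA ri rj phi ->
  exists l, 0 < l /\ third_len (-1) (-1) ri rj phi l.
Proof.
  intros hri hrj hphi hD.
  set (Ci := Ch ri) in *. set (Si := Sh ri) in *. set (Cj := Ch rj) in *. set (Sj := Sh rj) in *.
  set (ch := Ch phi) in *. set (sh := Sh phi) in *.
  assert (e1 : Ci * Ci - Si * Si = 1) by apply ChSh.
  assert (e2 : Cj * Cj - Sj * Sj = 1) by apply ChSh.
  assert (e3 : ch * ch - sh * sh = 1) by apply ChSh.
  assert (hCi : 1 < Ci) by (apply Ch_gt1; lra). assert (hCj : 1 < Cj) by (apply Ch_gt1; lra).
  assert (hch : 1 < ch) by (apply Ch_gt1; lra).
  assert (hSi : 0 < Si) by (apply Sh_pos; lra). assert (hSj : 0 < Sj) by (apply Sh_pos; lra).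
  assert (hsh : 0 < sh) by (apply Sh_pos; lra).
  set (Zc := Si * Sj / (2 * Ci * Cj)).
  assert (hZ : 0 < Zc) by (unfold Zc; apply Rdiv_lt_0_compat; nra).
  set (Yc := sqrt (1 + Zc * Zc)).
  assert (hY1 : 1 <= Yc) by apply sqrt_ge1.
  assert (eY : Yc * Yc - Zc * Zc = 1) by (unfold Yc; rewrite sqrt_sqrt; nra).
  assert (hZi : Zc * Ci < Si).
  { unfold Zc. replace (Si * Sj / (2 * Ci * Cj) * Ci) with (Si * (Sj / Cj) / 2) by (field; lra).
    assert (Sj / Cj < 1). { apply (Rmult_lt_reg_r Cj); [lra|]. unfold Rdiv. rewrite Rmult_assoc, Rinv_l by lra. nra. }
    assert (Si * (Sj / Cj) < Si * 1) by (apply Rmult_lt_compat_l; lra). lra. }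
  assert (hZj : Zc * Cj < Sj).
  { unfold Zc. replace (Si * Sj / (2 * Ci * Cj) * Cj) with (Sj * (Si / Ci) / 2) by (field; lra).
    assert (Si / Ci < 1). { apply (Rmult_lt_reg_r Ci); [lra|]. unfold Rdiv. rewrite Rmult_assoc, Rinv_l by lra. nra. }
    assert (Sj * (Si / Ci) < Sj * 1) by (apply Rmult_lt_compat_l; lra). lra. }
  set (c := mkV 0 Yc Zc).
  set (a := mkV 0 (- Ci * Yc + Si * Zc) (- Ci * Zc + Si * Yc)).
  set (b := mkV (Sj * sh) (- Cj * Yc + Sj * ch * Zc) (- Cj * Zc + Sj * ch * Yc)).
  assert (mcc : mink c c = 1) by (unfold mink, c; simpl; lra).
  assert (maa : mink a a = 1).
  { unfold mink, a; simpl. replace (0 * 0 + (- Ci * Yc + Si * Zc) * (- Ci * Yc + Si * Zc) - (- Ci * Zc + Si * Yc) * (- Ci * Zc + Si * Yc)) with ((Ci * Ci - Si * Si) * (Yc * Yc - Zc * Zc)) by ring. rewrite e1, eY. ring. }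
  assert (mbb : mink b b = 1).
  { unfold mink, b; simpl. replace (Sj * sh * (Sj * sh) + (- Cj * Yc + Sj * ch * Zc) * (- Cj * Yc + Sj * ch * Zc) - (- Cj * Zc + Sj * ch * Yc) * (- Cj * Zc + Sj * ch * Yc)) with (Sj * Sj * (sh * sh - ch * ch) + (Cj * Cj) * (Yc * Yc - Zc * Zc) + Sj * Sj * ch * ch * (1 - (Yc * Yc - Zc * Zc))) by ring. rewrite eY. replace (sh * sh - ch * ch) with (-1) by lra. lra. }
  assert (mac : mink a c = - Ci).
  { unfold mink, a, c; simpl. replace (0 * 0 + (- Ci * Yc + Si * Zc) * Yc - (- Ci * Zc + Si * Yc) * Zc) with (- Ci * (Yc * Yc - Zc * Zc)) by ring. rewrite eY. ring. }
  assert (mbc : mink b c = - Cj).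
  { unfold mink, b, c; simpl. replace (Sj * sh * 0 + (- Cj * Yc + Sj * ch * Zc) * Yc - (- Cj * Zc + Sj * ch * Yc) * Zc) with (- Cj * (Yc * Yc - Zc * Zc)) by ring. rewrite eY. ring. }
  assert (mab : mink a b = Ci * Cj - Si * Sj * ch).
  { unfold mink, a, b; simpl. replace (0 * (Sj * sh) + (- Ci * Yc + Si * Zc) * (- Cj * Yc + Sj * ch * Zc) - (- Ci * Zc + Si * Yc) * (- Cj * Zc + Sj * ch * Yc)) with ((Ci * Cj - Si * Sj * ch) * (Yc * Yc - Zc * Zc)) by ring. rewrite eY. ring. }
  assert (hdet : det3 a b c = Sj * sh * Si).
  { unfold det3, a, b, c; simpl. replace (Sj * sh * Si) with (Sj * sh * Si * (Yc * Yc - Zc * Zc)) by (rewrite eY; ring). ring. }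
  assert (vza : 0 < vz a) by (unfold a; simpl; nra).
  assert (vzb : 0 < vz b).
  { unfold b; simpl. assert (1 <= ch * Yc) by nra.
    assert (Sj * 1 <= Sj * (ch * Yc)) by (apply Rmult_le_compat_l; lra). nra. }
  assert (vzc : 0 < vz c) by (unfold c; simpl; lra).
  unfold DA in hD. fold Ci Si Cj Sj ch in hD.
  destruct (acosh_ex (- mink a b)) as [l [hl0 hl]].
  { rewrite mab. nra. }
  rewrite mab in hl.
  assert (hl1 : 0 < l).
  { destruct hl0 as [|h0]; auto. subst l. unfold Ch in hl. rewrite Ropp_0, exp_0 in hl. nra. }
  exists l. split; auto. right. exists a, b, c. split; [|split; [|split; [|split]]].
  - unfold gtri, is_type, normed. repeat split; try lra.
    all: try (unfold trunc_ok; intros; lra).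
    + rewrite hdet. apply Rgt_not_eq. apply Rmult_lt_0_compat; [apply Rmult_lt_0_compat|]; lra.
    + apply edge_ok_11. rewrite maa, mbb, mab. nra.
    + apply edge_ok_11. rewrite maa, mcc, mac. lra.
    + apply edge_ok_11. rewrite mbb, mcc, mbc. lra.
  - split; [intros; lra|]. replace (- (-1 * -1)) with (-1) by ring. rewrite tau_m1, mac. unfold Ci. ring.
  - split; [intros; lra|]. replace (- (-1 * -1)) with (-1) by ring. rewrite tau_m1, mbc. unfold Cj. ring.
  - split; [intros; lra|]. split; [intros; lra|]. intros _.
    exists (Ci / Si), (1 / Si), (Cj / Sj), (1 / Sj). cbv zeta.
    assert (Fi : vadd (vscal (Ci / Si) c) (vscal (1 / Si) a) = mkV 0 Zc Yc).
    { unfold vadd, vscal, a, c; simpl. f_equal; field; lra. }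
    assert (Fj : vadd (vscal (Cj / Sj) c) (vscal (1 / Sj) b) = mkV sh (ch * Zc) (ch * Yc)).
    { unfold vadd, vscal, b, c; simpl. f_equal; field; lra. }
    rewrite Fi, Fj. unfold mink; simpl. rewrite cosh_Ch. fold ch.
    repeat split; try nra.
  - split; [intros; lra|]. replace (- (-1 * -1)) with (-1) by ring. rewrite tau_m1, mab. lra.
Qed.
Lemma exp_pos_iff s : 0 < s <-> 1 < exp s.
Proof. split; intros h. rewrite <- exp_0. apply exp_increasing; auto.
  rewrite <- exp_0 in h. apply exp_lt_inv in h. exact h. Qed.

Definition tf r := (exp r - 1) / (exp r + 1).

Lemma tf_bounds r : 0 < r -> 0 < tf r < 1.
Proof. intros h. pose proof (exp_gt1 r h). unfold tf. split.
  apply Rdiv_lt_0_compat; lra.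
  apply (Rmult_lt_reg_r (exp r + 1)); [lra|]. unfold Rdiv. rewrite Rmult_assoc, Rinv_l by lra. lra. Qed.

Lemma Sh_tf r : 0 < r -> Sh r = 2 * tf r / (1 - tf r * tf r).
Proof. intros h. pose proof (exp_gt1 r h). unfold Sh, tf. rewrite exp_m. field. repeat split; nra. Qed.
Lemma Ch_tf r : 0 < r -> Ch r = (1 + tf r * tf r) / (1 - tf r * tf r).
Proof. intros h. pose proof (exp_gt1 r h). unfold Ch, tf. rewrite exp_m. field. repeat split; nra. Qed.

Lemma KA_iff ri rj phi : 0 < ri -> 0 < rj -> 0 < phi ->
  (1 < DA ri rj phi <-> - phi < G1 ri + G1 rj).
Proof.
  intros hi hj hp. pose proof (tf_bounds ri hi). pose proof (tf_bounds rj hj).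
  unfold DA. rewrite (Sh_tf ri), (Sh_tf rj), (Ch_tf ri), (Ch_tf rj) by auto.
  assert (hG : - phi < G1 ri + G1 rj <-> 1 < tf ri * tf rj * exp phi).
  { unfold G1. fold (tf ri) (tf rj).
    assert (E : exp (ln (tf ri) + ln (tf rj) + phi) = tf ri * tf rj * exp phi)
      by (rewrite !exp_plus, !exp_ln by lra; ring).
    split; intros h.
    - rewrite <- E. apply exp_pos_iff. lra.
    - rewrite <- E in h. apply exp_pos_iff in h. lra. }
  rewrite hG. unfold Ch. rewrite exp_m.
  set (X := exp phi). assert (hX : 1 < X) by (apply exp_gt1; auto).
  set (a := tf ri) in *. set (b := tf rj) in *.
  clearbody a b X.
  assert (key : (/ 2 * X + / 2 * / X) * (2 * a / (1 - a * a)) * (2 * b / (1 - b * b)) -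
     (1 + a * a) / (1 - a * a) * ((1 + b * b) / (1 - b * b)) - 1
     = 2 * (a * b * X - 1) * (X - a * b) / ((1 - a * a) * (1 - b * b) * X)).
  { field. repeat split; nra. }
  assert (hpos : 0 < (1 - a * a) * (1 - b * b) * X).
  { apply Rmult_lt_0_compat; [apply Rmult_lt_0_compat|]; nra. }
  assert (hab : a * b < 1) by nra.
  split; intros h.
  - assert (0 < 2 * (a * b * X - 1) * (X - a * b) / ((1 - a * a) * (1 - b * b) * X)) by lra.
    assert (0 < 2 * (a * b * X - 1) * (X - a * b)).
    { apply (Rmult_lt_reg_r (/ ((1 - a * a) * (1 - b * b) * X))).
      apply Rinv_0_lt_compat; lra. rewrite Rmult_0_l. exact H1. }
    nra.
  - assert (0 < 2 * (a * b * X - 1) * (X - a * b) / ((1 - a * a) * (1 - b * b) * X)).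
    { apply Rdiv_lt_0_compat; [|lra]. nra. }
    lra.
Qed.

Lemma sqrt_pos_sq x : 0 < x -> 0 < sqrt x /\ sqrt x * sqrt x = x.
Proof. intros h. split. apply sqrt_lt_R0; auto. apply sqrt_sqrt; lra. Qed.

Lemma big_hyp c1 c2 c3 : 1 < c1 -> 1 < c2 -> 1 < c3 ->
  exists v1 v2 v3, gtri (-1) (-1) (-1) v1 v2 v3 /\
    mink v2 v3 = - c1 /\ mink v1 v3 = - c2 /\ mink v1 v2 = - c3.
Proof.
  intros h1 h2 h3.
  destruct (sqrt_pos_sq ((c3 + 1) / 2)) as [hX eX]; [lra|].
  destruct (sqrt_pos_sq ((c3 - 1) / 2)) as [hZ eZ]; [lra|].
  set (X := sqrt ((c3 + 1) / 2)) in *. set (Zz := sqrt ((c3 - 1) / 2)) in *.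
  clearbody X Zz.
  set (p := (c1 - c2) / (2 * X)). set (w := (c1 + c2) / (2 * Zz)).
  assert (ep : p * X = (c1 - c2) / 2) by (unfold p; field; lra).
  assert (ew : w * Zz = (c1 + c2) / 2) by (unfold w; field; lra).
  assert (hw : 0 < w) by (unfold w; apply Rdiv_lt_0_compat; lra).
  assert (hpw : p * p < w * w).
  { assert (e1 : p * p * ((c3 + 1) / 2) = (c1 - c2) * (c1 - c2) / 4) by (rewrite <- eX; nra).
    assert (e2 : w * w * ((c3 - 1) / 2) = (c1 + c2) * (c1 + c2) / 4) by (rewrite <- eZ; nra).
    assert (p * p * ((c3 + 1) / 2) < w * w * ((c3 + 1) / 2)).
    { assert (w * w * ((c3 - 1) / 2) <= w * w * ((c3 + 1) / 2)).
      { apply Rmult_le_compat_l; nra. }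
      nra. }
    apply (Rmult_lt_reg_r ((c3 + 1) / 2)); lra. }
  destruct (sqrt_pos_sq (1 + w * w - p * p)) as [hq eq]; [lra|].
  set (q := sqrt (1 + w * w - p * p)) in *. clearbody q.
  set (v1 := mkV X 0 Zz). set (v2 := mkV (- X) 0 Zz). set (v3 := mkV p q w).
  assert (m11 : mink v1 v1 = 1) by (unfold mink, v1; simpl; lra).
  assert (m22 : mink v2 v2 = 1) by (unfold mink, v2; simpl; lra).
  assert (m33 : mink v3 v3 = 1) by (unfold mink, v3; simpl; lra).
  assert (m12 : mink v1 v2 = - c3) by (unfold mink, v1, v2; simpl; lra).
  assert (m13 : mink v1 v3 = - c2) by (unfold mink, v1, v3; simpl; lra).
  assert (m23 : mink v2 v3 = - c1) by (unfold mink, v2, v3; simpl; lra).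
  assert (hdet : det3 v1 v2 v3 = - 2 * X * Zz * q) by (unfold det3, v1, v2, v3; simpl; ring).
  exists v1, v2, v3. split; [|auto].
  unfold gtri, is_type, normed. repeat split; try lra.
  all: try (unfold trunc_ok; intros; lra).
  all: try (unfold v1, v2, v3; simpl; lra).
  - rewrite hdet. apply Rlt_not_eq. assert (0 < X * Zz * q) by (apply Rmult_lt_0_compat; [apply Rmult_lt_0_compat|]; lra). lra.
  - apply edge_ok_11. lra.
  - apply edge_ok_11. lra.
  - apply edge_ok_11. lra.
Qed.

Lemma Mset_hyp delta p1 p2 p3 (dom : R -> Prop) (K : R -> R -> R -> Prop) :
  inI delta p1 -> inI delta p2 -> inI delta p3 ->
  (forall r, inJ (-1 * delta) r <-> dom r) ->
  (forall ri rj phi l, inI delta phi -> dom ri -> dom rj -> third_len (-1) delta ri rj phi l -> K ri rj phi) ->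
  (forall ri rj phi, inI delta phi -> dom ri -> dom rj -> K ri rj phi ->
      exists l, 0 < l /\ third_len (-1) delta ri rj phi l) ->
  forall r1 r2 r3,
  Mset (-1) delta p1 p2 p3 r1 r2 r3 <->
  (dom r1 /\ dom r2 /\ dom r3 /\ K r2 r3 p1 /\ K r1 r3 p2 /\ K r1 r2 p3).
Proof.
  intros hp1 hp2 hp3 HJ Hn Hs r1 r2 r3. split.
  - intros [j1 [j2 [j3 [l1 [l2 [l3 [t1 [t2 [t3 _]]]]]]]]].
    apply HJ in j1. apply HJ in j2. apply HJ in j3.
    repeat split; auto; eapply Hn; eauto.
  - intros [d1 [d2 [d3 [k1 [k2 k3]]]]].
    destruct (Hs r2 r3 p1 hp1 d2 d3 k1) as [l1 [hl1 t1]].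
    destruct (Hs r1 r3 p2 hp2 d1 d3 k2) as [l2 [hl2 t2]].
    destruct (Hs r1 r2 p3 hp3 d1 d2 k3) as [l3 [hl3 t3]].
    destruct (big_hyp (Ch l1) (Ch l2) (Ch l3)) as [v1 [v2 [v3 [G [e1 [e2 e3]]]]]];
      try (apply Ch_gt1; auto).
    split; [apply HJ; auto|]. split; [apply HJ; auto|]. split; [apply HJ; auto|].
    exists l1, l2, l3. split; [auto|split; [auto|split; [auto|]]].
    exists v1, v2, v3. split; [exact G|].
    unfold gen_len. replace (- (-1 * -1)) with (-1) by ring. rewrite !tau_m1. repeat split; try (intros; lra); lra.
Qed.

Lemma Mset_A p1 p2 p3 : inI (-1) p1 -> inI (-1) p2 -> inI (-1) p3 ->
  forall r1 r2 r3, Mset (-1) (-1) p1 p2 p3 r1 r2 r3 <->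
  (0 < r1 /\ 0 < r2 /\ 0 < r3 /\ 1 < DA r2 r3 p1 /\ 1 < DA r1 r3 p2 /\ 1 < DA r1 r2 p3).
Proof.
  intros h1 h2 h3. apply (Mset_hyp (-1) p1 p2 p3 (fun r => 0 < r) (fun ri rj phi => 1 < DA ri rj phi)); auto.
  - intros r. unfold inJ. split; intros h. apply h. lra. intros; auto.
  - intros ri rj phi l _ hi hj ht. eapply nec_A; eauto.
  - intros ri rj phi [hp _] hi hj hk. apply suf_A; auto.
Qed.

Definition KB ri rj phi := exp (- ri) + exp (- rj) < phi / 2.

Lemma nec_B ri rj phi l : 0 < phi ->
  third_len (-1) 0 ri rj phi l -> KB ri rj phi.
Proof.
  intros hphi [[h _]|[a [b [c [G [La [Lb [An Lab]]]]]]]]; [lra|].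
  destruct G as [_ [_ [_ [Na [Nb [Nc [_ [Eab _]]]]]]]].
  pose proof (edge_hyp a b Na Nb Eab) as hab.
  destruct La as [_ La]. destruct Lb as [_ Lb].
  replace (- (-1 * 0)) with 0 in La, Lb by ring. rewrite tau_0 in La, Lb.
  destruct An as [_ [An _]]. destruct (An ltac:(reflexivity)) as [ai [bi [aj [bj H]]]].
  cbv zeta in H. destruct H as [hii [hiz [hic [hjj [hjz [hjc hp]]]]]].
  mexpH hii. mexpH hic. mexpH hjj. mexpH hjc. mexpH hp.
  assert (hcc : mink c c = 0) by (destruct Nc; lra).
  assert (haa : mink a a = 1) by (destruct Na; lra).
  assert (hbb : mink b b = 1) by (destruct Nb; lra).
  rewrite ?(mink_sym c a), ?(mink_sym c b), ?(mink_sym b a), ?(mink_sym c (vscal _ _)) in *.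
  rewrite hcc, haa, hbb in *.
  assert (eri : exp (- ri) * exp ri = 1) by (rewrite exp_m; field; apply Rgt_not_eq, exp_pos).
  assert (erj : exp (- rj) * exp rj = 1) by (rewrite exp_m; field; apply Rgt_not_eq, exp_pos).
  pose proof (exp_pos (- ri)). pose proof (exp_pos (- rj)).
  assert (hEi : 0 < exp ri) by apply exp_pos. assert (hEj : 0 < exp rj) by apply exp_pos.
  set (Ei := exp ri) in *. set (Ej := exp rj) in *. clearbody Ei Ej.
  set (m := mink a b) in *.
  assert (hac : mink a c = - (/ 2 * Ei)) by lra.
  assert (hbc : mink b c = - (/ 2 * Ej)) by lra.
  rewrite hac, hbc in *.
  assert (hbi : bi = exp (- ri)) by nra.
  assert (hbj : bj = exp (- rj)) by nra.
  assert (hai : ai = 1 + bi * bi) by nra.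
  assert (haj : aj = 1 + bj * bj) by nra.
  assert (eEi : Ei = / bi) by (rewrite hbi; field_simplify_eq; [lra| lra]).
  assert (eEj : Ej = / bj) by (rewrite hbj; field_simplify_eq; [lra| lra]).
  subst Ei Ej.
  match type of hp with phi = 2 * sqrt ?Q =>
    assert (eQ : Q = bi * bi + bj * bj - 2 * bi * bj * m) by (rewrite hai, haj; field; lra) end.
  rewrite eQ in hp. clear eQ.
  set (Q := bi * bi + bj * bj - 2 * bi * bj * m) in *.
  assert (hQ : 0 < Q).
  { destruct (Rlt_or_le 0 Q) as [|hQ]; auto. rewrite sqrt_neg_0 in hp by auto. lra. }
  assert (hq : (phi / 2) * (phi / 2) = Q) by (rewrite hp; replace (2 * sqrt Q / 2) with (sqrt Q) by field; apply sqrt_sqrt; lra).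
  unfold KB. rewrite <- hbi, <- hbj.
  assert (0 < bi * bj) by (rewrite hbi, hbj; apply Rmult_lt_0_compat; lra).
  assert ((bi + bj) * (bi + bj) < (phi / 2) * (phi / 2)) by (unfold Q in hq; nra).
  rewrite hbi, hbj in *. nra.
Qed.

Lemma edge_ok_gen s t v w : 0 < s -> 0 < t ->
  s * s * mink v v + 2 * s * t * mink v w + t * t * mink w w < 0 -> edge_ok v w.
Proof. intros hs ht h. exists s, t. split; [lra|split; [lra|]].
  mexp. rewrite (mink_sym w v). nra. Qed.

Lemma suf_B ri rj phi : 0 < phi -> KB ri rj phi ->
  exists l, 0 < l /\ third_len (-1) 0 ri rj phi l.
Proof.
  intros hphi hK. unfold KB in hK.
  assert (eri : exp (- ri) * exp ri = 1) by (rewrite exp_m; field; apply Rgt_not_eq, exp_pos).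
  assert (erj : exp (- rj) * exp rj = 1) by (rewrite exp_m; field; apply Rgt_not_eq, exp_pos).
  pose proof (exp_pos (- ri)) as hbi. pose proof (exp_pos (- rj)) as hbj.
  assert (hEi : 0 < exp ri) by apply exp_pos. assert (hEj : 0 < exp rj) by apply exp_pos.
  set (bi := exp (- ri)) in *. set (bj := exp (- rj)) in *.
  set (Ei := exp ri) in *. set (Ej := exp rj) in *.
  assert (eEi : exp ri = Ei) by reflexivity. assert (eEj : exp rj = Ej) by reflexivity.
  clearbody bi bj Ei Ej.
  set (T := 1 + bi + bj). set (L := / (4 * T)). set (s := phi / 2).
  assert (hT : 0 < T) by (unfold T; lra). assert (hL : 0 < L) by (unfold L; apply Rinv_0_lt_compat; lra).
  assert (eLT : L * T = / 4) by (unfold L; field; lra).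
  assert (hs : 0 < s) by (unfold s; lra).
  assert (hTi : bi < T) by (unfold T; lra). assert (hTj : bj < T) by (unfold T; lra).
  assert (es : phi = 2 * s) by (unfold s; field).
  clearbody T L s.
  set (c := mkV 0 L L).
  set (a := mkV 0 ((L * (0 - bi * bi) - T) / bi) ((L * (0 - bi * bi) + T) / bi)).
  set (b := mkV (s / bj) ((L * (s * s - bj * bj) - T) / bj) ((L * (s * s - bj * bj) + T) / bj)).
  assert (mcc : mink c c = 0) by (unfold mink, c; simpl; ring).
  assert (maa : mink a a = 1) by (unfold mink, a; simpl; field_simplify_eq; [nra|lra]).
  assert (mbb : mink b b = 1) by (unfold mink, b; simpl; field_simplify_eq; [nra|lra]).
  assert (mac : mink a c = - (/ 2 * Ei)) by (unfold mink, a, c; simpl; field_simplify_eq; [nra|lra]).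
  assert (mbc : mink b c = - (/ 2 * Ej)) by (unfold mink, b, c; simpl; field_simplify_eq; [nra|lra]).
  assert (mab : mink a b = (bi * bi + bj * bj - s * s) / (2 * bi * bj)).
  { unfold mink, a, b; simpl. field_simplify_eq; [nra|lra]. }
  assert (hdet : det3 a b c = s / bj * L * (2 * T / bi)).
  { unfold det3, a, b, c; simpl. field. lra. }
  assert (hTb : forall x, 0 < x -> x < T -> L * (x * x) < T).
  { intros x hx hxT. assert (L * (x * x) < L * (T * T)) by (apply Rmult_lt_compat_l; nra). nra. }
  assert (vza : 0 < vz a).
  { unfold a; simpl. apply Rdiv_lt_0_compat; [|lra]. pose proof (hTb bi hbi hTi). nra. }
  assert (vzb : 0 < vz b).
  { unfold b; simpl. apply Rdiv_lt_0_compat; [|lra]. pose proof (hTb bj hbj hTj).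
    assert (0 <= L * (s * s)) by (apply Rmult_le_pos; nra). nra. }
  assert (vzc : 0 < vz c) by (unfold c; simpl; lra).
  assert (hD : 1 < - mink a b).
  { rewrite mab. assert (2 * bi * bj < s * s - bi * bi - bj * bj) by nra.
    apply (Rmult_lt_reg_r (2 * bi * bj)); [nra|].
    replace (- ((bi * bi + bj * bj - s * s) / (2 * bi * bj)) * (2 * bi * bj)) with (s * s - bi * bi - bj * bj) by (field; lra). lra. }
  destruct (acosh_ex (- mink a b)) as [l [hl0 hl]]; [lra|].
  assert (hl1 : 0 < l).
  { destruct hl0 as [|h0]; auto. subst l. unfold Ch in hl. rewrite Ropp_0, exp_0 in hl. lra. }
  exists l. split; auto. right. exists a, b, c. split; [|split; [|split; [|split]]].
  - unfold gtri, is_type, normed. repeat split; try lra.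
    all: try (unfold trunc_ok; intros; lra).
    + rewrite hdet. apply Rgt_not_eq. apply Rmult_lt_0_compat; [apply Rmult_lt_0_compat|]; try (apply Rdiv_lt_0_compat); lra.
    + apply edge_ok_11. lra.
    + apply (edge_ok_gen 1 (2 * bi)); try lra. rewrite maa, mac, mcc. nra.
    + apply (edge_ok_gen 1 (2 * bj)); try lra. rewrite mbb, mbc, mcc. nra.
  - split; [intros; lra|]. replace (- (-1 * 0)) with 0 by ring. rewrite tau_0, mac, eEi. ring.
  - split; [intros; lra|]. replace (- (-1 * 0)) with 0 by ring. rewrite tau_0, mbc, eEj. ring.
  - split; [intros; lra|]. split; [|intros; lra]. intros _.
    exists (1 + bi * bi), bi, (1 + bj * bj), bj. cbv zeta.
    assert (Fi : vadd (vscal (1 + bi * bi) c) (vscal bi a) = mkV 0 (L - T) (L + T)).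
    { unfold vadd, vscal, a, c; simpl. f_equal; field; lra. }
    assert (Fj : vadd (vscal (1 + bj * bj) c) (vscal bj b) = mkV s (L * (1 + s * s) - T) (L * (1 + s * s) + T)).
    { unfold vadd, vscal, b, c; simpl. f_equal; field; lra. }
    rewrite Fi, Fj. unfold vsub, vadd, vscal, mink; simpl.
    assert (0 <= L * (s * s)) by (apply Rmult_le_pos; nra).
    repeat split; try nra.
    match goal with |- phi = 2 * sqrt ?Q => replace Q with (s * s) by ring end.
    rewrite sqrt_square by lra. exact es.
  - split; [intros; lra|]. replace (- (-1 * -1)) with (-1) by ring. rewrite tau_m1. lra.
Qed.

Lemma Mset_B p1 p2 p3 : inI 0 p1 -> inI 0 p2 -> inI 0 p3 ->
  forall r1 r2 r3, Mset (-1) 0 p1 p2 p3 r1 r2 r3 <->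
  (True /\ True /\ True /\ KB r2 r3 p1 /\ KB r1 r3 p2 /\ KB r1 r2 p3).
Proof.
  intros h1 h2 h3. apply (Mset_hyp 0 p1 p2 p3 (fun r => True) KB); auto.
  - intros r. unfold inJ. split; intros h; auto. intros hn; exfalso; apply hn; ring.
  - intros ri rj phi l [hp _] _ _ ht. eapply nec_B; eauto.
  - intros ri rj phi [hp _] _ _ hk. apply suf_B; auto.
Qed.

Lemma KB_iff ri rj phi : KB ri rj phi <-> - phi < G0 ri + G0 rj.
Proof. unfold KB, G0. split; intros; lra. Qed.

Definition DC ri rj phi := Sh ri * Sh rj - cos phi * Ch ri * Ch rj.

Lemma sc1 x : sin x * sin x + cos x * cos x = 1.
Proof. pose proof (sin2_cos2 x). unfold Rsqr in H. lra. Qed.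

Lemma nec_C ri rj phi l : 0 < ri -> 0 < rj ->
  third_len (-1) 1 ri rj phi l -> 1 < DC ri rj phi.
Proof.
  intros hri hrj [[_ [hp _]]|[a [b [c [G [La [Lb [An Lab]]]]]]]].
  - subst phi. unfold DC. rewrite cos_PI.
    assert (e : Sh ri * Sh rj - -1 * Ch ri * Ch rj = Ch (ri + rj)) by (rewrite Ch_add; ring).
    rewrite e. apply Ch_gt1. lra.
  - destruct G as [_ [_ [_ [Na [Nb [Nc [_ [Eab _]]]]]]]].
    pose proof (edge_hyp a b Na Nb Eab) as hab.
    destruct La as [_ La]. destruct Lb as [_ Lb].
    replace (- (-1 * 1)) with 1 in La, Lb by ring. rewrite tau_1 in La, Lb.
    destruct An as [An _]. specialize (An ltac:(reflexivity)). cbv zeta in An.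
    destruct An as [hphi he].
    mexpH he.
    assert (hcc : mink c c = -1) by (destruct Nc; lra).
    assert (haa : mink a a = 1) by (destruct Na; lra).
    assert (hbb : mink b b = 1) by (destruct Nb; lra).
    rewrite ?(mink_sym c a), ?(mink_sym c b), ?(mink_sym b a) in he.
    rewrite hcc, haa, hbb in he.
    assert (hac : mink a c = - Sh ri) by lra.
    assert (hbc : mink b c = - Sh rj) by lra.
    rewrite hac, hbc in he.
    pose proof (ChSh ri). pose proof (ChSh rj). pose proof (Ch_pos ri). pose proof (Ch_pos rj).
    match type of he with cos phi * sqrt ?Q = _ =>
      assert (eQ : Q = (Ch ri * Ch rj) * (Ch ri * Ch rj)) by nra end.
    rewrite eQ, sqrt_square in he by nra.
    unfold DC. nra.
Qed.

Lemma suf_C ri rj phi : 0 < ri -> 0 < rj -> 0 < phi -> phi <= PI -> 1 < DC ri rj phi ->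
  exists l, 0 < l /\ third_len (-1) 1 ri rj phi l.
Proof.
  intros hri hrj hp hpi hD.
  destruct hpi as [hpi|hpi].
  2:{ exists (ri + rj). split; [lra|]. left. auto. }
  pose proof (ChSh ri) as e1. pose proof (ChSh rj) as e2.
  pose proof (Ch_gt1 ri hri). pose proof (Ch_gt1 rj hrj).
  pose proof (Sh_pos ri hri). pose proof (Sh_pos rj hrj).
  pose proof (sc1 phi) as e3. pose proof (sin_gt_0 phi hp hpi) as hs.
  unfold DC in hD.
  set (Ci := Ch ri) in *. set (Si := Sh ri) in *. set (Cj := Ch rj) in *. set (Sj := Sh rj) in *.
  set (co := cos phi) in *. set (si := sin phi) in *.
  assert (eCi : Ch ri = Ci) by reflexivity. assert (eSi : Sh ri = Si) by reflexivity.
  assert (eCj : Ch rj = Cj) by reflexivity. assert (eSj : Sh rj = Sj) by reflexivity.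
  assert (eco : cos phi = co) by reflexivity.
  clearbody Ci Si Cj Sj co si.
  set (c := mkV 0 0 1). set (a := mkV Ci 0 Si). set (b := mkV (co * Cj) (si * Cj) Sj).
  assert (mcc : mink c c = -1) by (unfold mink, c; simpl; ring).
  assert (maa : mink a a = 1) by (unfold mink, a; simpl; lra).
  assert (mbb : mink b b = 1) by (unfold mink, b; simpl; nra).
  assert (mac : mink a c = - Si) by (unfold mink, a, c; simpl; ring).
  assert (mbc : mink b c = - Sj) by (unfold mink, b, c; simpl; ring).
  assert (mab : mink a b = Ci * co * Cj - Si * Sj) by (unfold mink, a, b; simpl; ring).
  assert (hdet : det3 a b c = Ci * (si * Cj)) by (unfold det3, a, b, c; simpl; ring).
  destruct (acosh_ex (- mink a b)) as [l [hl0 hl]]; [lra|].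
  assert (hl1 : 0 < l).
  { destruct hl0 as [|h0]; auto. subst l. unfold Ch in hl. rewrite Ropp_0, exp_0 in hl. lra. }
  exists l. split; auto. right. exists a, b, c. split; [|split; [|split; [|split]]].
  - unfold gtri, is_type, normed. repeat split; try lra.
    all: try (unfold trunc_ok; intros; lra).
    all: try (unfold a, b, c; simpl; lra).
    + rewrite hdet. apply Rgt_not_eq. apply Rmult_lt_0_compat; [|apply Rmult_lt_0_compat]; lra.
    + apply edge_ok_11. lra.
    + apply edge_ok_11. lra.
    + apply edge_ok_11. lra.
  - split; [intros; lra|]. replace (- (-1 * 1)) with 1 by ring. rewrite tau_1, mac, eSi. ring.
  - split; [intros; lra|]. replace (- (-1 * 1)) with 1 by ring. rewrite tau_1, mbc, eSj. ring.
  - split; [|split; intros; lra]. intros _. cbv zeta.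
    rewrite mac, mbc.
    assert (Fi : vadd a (vscal (- Si) c) = mkV Ci 0 0) by (unfold vadd, vscal, a, c; simpl; f_equal; ring).
    assert (Fj : vadd b (vscal (- Sj) c) = mkV (co * Cj) (si * Cj) 0) by (unfold vadd, vscal, b, c; simpl; f_equal; ring).
    rewrite Fi, Fj. unfold mink; simpl. split; [lra|]. rewrite eco.
    match goal with |- co * sqrt ?Q = _ => replace Q with ((Ci * Cj) * (Ci * Cj)) by nra end.
    rewrite sqrt_square by nra. ring.
  - split; [intros; lra|]. replace (- (-1 * -1)) with (-1) by ring. rewrite tau_m1. lra.
Qed.

Lemma sq_nonneg x : 0 <= x * x.
Proof. pose proof (Rle_0_sqr x). unfold Rsqr in H. exact H. Qed.

Lemma theta_facts r : 0 < r ->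
  0 < 2 * atan (exp (- r)) < PI / 2 /\ Sh r = cos (2 * atan (exp (- r))) * Ch r /\
  1 = sin (2 * atan (exp (- r))) * Ch r.
Proof.
  intros hr. set (x := exp (- r)).
  assert (hx0 : 0 < x) by apply exp_pos.
  assert (hx1 : x < 1).
  { unfold x. rewrite <- exp_0. apply exp_increasing. lra. }
  assert (ex : exp r = / x) by (unfold x; rewrite exp_m, Rinv_inv; reflexivity).
  pose proof (sq_nonneg x).
  assert (hsq : sqrt (1 + x²) * sqrt (1 + x²) = 1 + x²) by (apply sqrt_sqrt; unfold Rsqr; lra).
  assert (hsq0 : 0 < sqrt (1 + x²)) by (apply sqrt_lt_R0; unfold Rsqr; lra).
  assert (hc : cos (2 * atan x) = (1 - x * x) / (1 + x * x)).
  { rewrite cos_2a, cos_atan, sin_atan. unfold Rsqr in *.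
    set (q := sqrt (1 + x * x)) in *. field_simplify; try lra. replace (q ^ 2) with (x ^ 2 + 1) by (ring_simplify in hsq; lra). field. lra. }
  assert (hs : sin (2 * atan x) = 2 * x / (1 + x * x)).
  { rewrite sin_2a, cos_atan, sin_atan. unfold Rsqr in *.
    set (q := sqrt (1 + x * x)) in *. field_simplify; try lra. replace (q ^ 2) with (x ^ 2 + 1) by (ring_simplify in hsq; lra). field. lra. }
  split; [split|split].
  - pose proof (atan_pos x hx0). lra.
  - assert (atan x < atan 1) by (apply atan_increasing; lra). rewrite atan_1 in H0. lra.
  - rewrite hc. unfold Sh, Ch. rewrite ex. fold x. field. lra.
  - rewrite hs. unfold Sh, Ch. rewrite ex. fold x. field. lra.
Qed.

Lemma KC_iff ri rj phi : 0 < ri -> 0 < rj -> 0 < phi -> phi <= PI ->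
  (1 < DC ri rj phi <-> - phi < Gm ri + Gm rj).
Proof.
  intros hi hj hp hpi.
  destruct (theta_facts ri hi) as [[ti0 ti1] [si ci]].
  destruct (theta_facts rj hj) as [[tj0 tj1] [sj cj]].
  unfold Gm, DC. set (ti := 2 * atan (exp (- ri))) in *. set (tj := 2 * atan (exp (- rj))) in *.
  replace (-2 * atan (exp (- ri)) + -2 * atan (exp (- rj))) with (- (ti + tj)) by (unfold ti, tj; ring).
  pose proof (Ch_pos ri). pose proof (Ch_pos rj).
  assert (key : Sh ri * Sh rj - cos phi * Ch ri * Ch rj - 1 = Ch ri * Ch rj * (cos (ti + tj) - cos phi)).
  { assert (e : sin ti * Ch ri * (sin tj * Ch rj) = 1) by (rewrite <- ci, <- cj; ring).
    rewrite cos_plus, si, sj. rewrite <- e at 1. ring. }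
  assert (hC : 0 < Ch ri * Ch rj) by (apply Rmult_lt_0_compat; lra).
  split; intros h.
  - assert (0 < cos (ti + tj) - cos phi).
    { apply (Rmult_lt_reg_l (Ch ri * Ch rj)); lra. }
    assert (ti + tj < phi) by (apply (cos_decreasing_0 phi (ti + tj)); lra). lra.
  - assert (cos phi < cos (ti + tj)) by (apply cos_decreasing_1; lra).
    assert (0 < Ch ri * Ch rj * (cos (ti + tj) - cos phi)) by (apply Rmult_lt_0_compat; lra). lra.
Qed.

Lemma Mset_C p1 p2 p3 : inI 1 p1 -> inI 1 p2 -> inI 1 p3 ->
  forall r1 r2 r3, Mset (-1) 1 p1 p2 p3 r1 r2 r3 <->
  (0 < r1 /\ 0 < r2 /\ 0 < r3 /\ 1 < DC r2 r3 p1 /\ 1 < DC r1 r3 p2 /\ 1 < DC r1 r2 p3).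
Proof.
  intros h1 h2 h3. apply (Mset_hyp 1 p1 p2 p3 (fun r => 0 < r) (fun ri rj phi => 1 < DC ri rj phi)); auto.
  - intros r. unfold inJ. split; intros h. apply h. lra. intros; auto.
  - intros ri rj phi l _ hi hj ht. eapply nec_C; eauto.
  - intros ri rj phi [hp hp2] hi hj hk. apply suf_C; auto.
Qed.

Lemma range_Gm y : (- (PI / 2) < y < 0) <-> exists r, 0 < r /\ Gm r = y.
Proof.
  split.
  - intros [h1 h2]. pose proof PI2_1.
    assert (hx0 : 0 < tan (- y / 2)) by (apply tan_gt_0; lra).
    assert (hx1 : tan (- y / 2) < 1).
    { rewrite <- tan_PI4. apply tan_increasing; lra. }
    exists (- ln (tan (- y / 2))). split.
    + assert (ln (tan (- y / 2)) < 0) by (rewrite <- ln_1; apply ln_increasing; lra). lra.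
    + unfold Gm. rewrite Ropp_involutive, exp_ln by lra. rewrite atan_tan by lra. field.
  - intros [r [hr <-]]. destruct (theta_facts r hr) as [[h0 h1] _]. unfold Gm. lra.
Qed.

Lemma range_G1 y : y < 0 <-> exists r, 0 < r /\ G1 r = y.
Proof.
  split.
  - intros h. set (t := exp y).
    assert (ht0 : 0 < t) by apply exp_pos.
    assert (ht1 : t < 1) by (unfold t; rewrite <- exp_0; apply exp_increasing; lra).
    exists (ln ((1 + t) / (1 - t))). split.
    + rewrite <- ln_1. apply ln_increasing; [lra|].
      apply (Rmult_lt_reg_r (1 - t)); [lra|]. unfold Rdiv. rewrite Rmult_assoc, Rinv_l by lra. lra.
    + unfold G1. rewrite exp_ln.
      2:{ apply Rdiv_lt_0_compat; lra. }
      replace (((1 + t) / (1 - t) - 1) / ((1 + t) / (1 - t) + 1)) with t by (field; lra).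
      unfold t. apply ln_exp.
  - intros [r [hr <-]]. unfold G1. fold (tf r). destruct (tf_bounds r hr).
    rewrite <- ln_1. apply ln_increasing; lra.
Qed.

Lemma range_G0 y : y < 0 <-> exists r, True /\ G0 r = y.
Proof.
  split.
  - intros h. exists (- ln (- y / 2)). split; auto. unfold G0.
    rewrite Ropp_involutive, exp_ln by lra. field.
  - intros [r [_ <-]]. unfold G0. pose proof (exp_pos (- r)). lra.
Qed.

Lemma suf_D ri rj phi : 0 < ri -> 0 < rj -> PI / 2 <= phi -> phi <= PI ->
  exists l, third_len 1 1 ri rj phi l /\ l <= ri + rj /\ ri < l /\ rj < l.
Proof.
  intros hri hrj hp hpi.
  destruct hpi as [hpi|hpi].
  2:{ exists (ri + rj). split; [left; auto|]. lra. }
  pose proof PI2_1.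
  pose proof (ChSh ri) as e1. pose proof (ChSh rj) as e2.
  pose proof (Ch_gt1 ri hri). pose proof (Ch_gt1 rj hrj).
  pose proof (Sh_pos ri hri). pose proof (Sh_pos rj hrj).
  pose proof (sc1 phi) as e3. pose proof (sin_gt_0 phi ltac:(lra) hpi) as hs.
  pose proof (cos_le_0 phi hp ltac:(lra)) as hc.
  pose proof (Ch_add ri rj) as ea.
  assert (hLi : Ch ri < Ch ri * Ch rj) by nra.
  assert (hLj : Ch rj < Ch ri * Ch rj) by nra.
  set (Ci := Ch ri) in *. set (Si := Sh ri) in *. set (Cj := Ch rj) in *. set (Sj := Sh rj) in *.
  set (co := cos phi) in *. set (si := sin phi) in *.
  assert (eCi : Ch ri = Ci) by reflexivity. assert (eCj : Ch rj = Cj) by reflexivity.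
  assert (eco : cos phi = co) by reflexivity.
  clearbody Ci Si Cj Sj co si.
  set (c := mkV 0 0 1). set (a := mkV Si 0 Ci). set (b := mkV (co * Sj) (si * Sj) Cj).
  assert (mcc : mink c c = -1) by (unfold mink, c; simpl; ring).
  assert (maa : mink a a = -1) by (unfold mink, a; simpl; lra).
  assert (mbb : mink b b = -1) by (unfold mink, b; simpl; nra).
  assert (mac : mink a c = - Ci) by (unfold mink, a, c; simpl; ring).
  assert (mbc : mink b c = - Cj) by (unfold mink, b, c; simpl; ring).
  assert (mab : mink a b = Si * co * Sj - Ci * Cj) by (unfold mink, a, b; simpl; ring).
  assert (hdet : det3 a b c = Si * (si * Sj)) by (unfold det3, a, b, c; simpl; ring).
  assert (hSS : 0 < Si * Sj) by (apply Rmult_lt_0_compat; lra).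
  assert (hm1 : Ci * Cj <= - mink a b) by (rewrite mab; nra).
  assert (hm2 : - mink a b <= Ci * Cj + Si * Sj) by (rewrite mab; nra).
  destruct (acosh_ex (- mink a b)) as [l [hl0 hl]]; [lra|].
  exists l. split; [|split; [|split]].
  - right. exists a, b, c. split; [|split; [|split; [|split]]].
    + unfold gtri, is_type, normed. repeat split; try lra.
      all: try (unfold trunc_ok; intros; lra).
      all: try (unfold a, b, c; simpl; lra).
      * rewrite hdet. apply Rgt_not_eq. apply Rmult_lt_0_compat; [|apply Rmult_lt_0_compat]; lra.
      * apply edge_ok_11. lra.
      * apply edge_ok_11. lra.
      * apply edge_ok_11. lra.
    + split; [intros; lra|]. replace (- (1 * 1)) with (-1) by ring. rewrite tau_m1, mac, eCi. ring.
    + split; [intros; lra|]. replace (- (1 * 1)) with (-1) by ring. rewrite tau_m1, mbc, eCj. ring.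
    + split; [|split; intros; lra]. intros _. cbv zeta.
      rewrite mac, mbc.
      assert (Fi : vadd a (vscal (- Ci) c) = mkV Si 0 0) by (unfold vadd, vscal, a, c; simpl; f_equal; ring).
      assert (Fj : vadd b (vscal (- Cj) c) = mkV (co * Sj) (si * Sj) 0) by (unfold vadd, vscal, b, c; simpl; f_equal; ring).
      rewrite Fi, Fj. unfold mink; simpl. split; [lra|]. rewrite eco.
      match goal with |- co * sqrt ?Q = _ => replace Q with ((Si * Sj) * (Si * Sj)) by nra end.
      rewrite sqrt_square by nra. ring.
    + split; [intros; lra|]. replace (- (1 * 1)) with (-1) by ring. rewrite tau_m1. lra.
  - apply Ch_le_inv; lra.
  - apply Ch_lt_inv; lra.
  - apply Ch_lt_inv; lra.
Qed.

Lemma big_pt l1 l2 l3 : 0 < l1 -> 0 < l2 -> 0 < l3 ->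
  l1 < l2 + l3 -> l2 < l1 + l3 -> l3 < l1 + l2 ->
  exists v1 v2 v3, gtri 1 1 1 v1 v2 v3 /\
    mink v2 v3 = - Ch l1 /\ mink v1 v3 = - Ch l2 /\ mink v1 v2 = - Ch l3.
Proof.
  intros h1 h2 h3 t1 t2 t3.
  assert (u1 : Ch l1 < Ch l2 * Ch l3 + Sh l2 * Sh l3) by (rewrite <- Ch_add; apply Ch_lt; lra).
  assert (u2 : Ch l2 * Ch l3 - Sh l2 * Sh l3 < Ch l1).
  { destruct (Rle_or_lt l3 l2).
    - replace (Ch l2 * Ch l3 - Sh l2 * Sh l3) with (Ch (l2 + - l3)).
      apply Ch_lt; lra. rewrite Ch_add, Ch_opp. unfold Sh. rewrite Ropp_involutive. field.
    - replace (Ch l2 * Ch l3 - Sh l2 * Sh l3) with (Ch (l3 + - l2)).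
      apply Ch_lt; lra. rewrite Ch_add, Ch_opp. unfold Sh. rewrite Ropp_involutive. field. }
  pose proof (ChSh l2) as e2. pose proof (ChSh l3) as e3.
  pose proof (Sh_pos l2 h2). pose proof (Sh_pos l3 h3).
  pose proof (Ch_gt1 l1 h1). pose proof (Ch_gt1 l2 h2). pose proof (Ch_gt1 l3 h3).
  set (C1 := Ch l1) in *. set (C2 := Ch l2) in *. set (C3 := Ch l3) in *.
  set (S2 := Sh l2) in *. set (S3 := Sh l3) in *. clearbody C1 C2 C3 S2 S3.
  set (x := (C2 * C3 - C1) / S3).
  assert (ex : x * S3 = C2 * C3 - C1) by (unfold x; field; lra).
  assert (hx : x * x < S2 * S2).
  { assert ((x * S3) * (x * S3) < (S2 * S3) * (S2 * S3)) by (rewrite ex; nra).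
    assert (0 < S3 * S3) by nra. nra. }
  destruct (sqrt_pos_sq (S2 * S2 - x * x)) as [hy ey]; [lra|].
  set (y := sqrt (S2 * S2 - x * x)) in *. clearbody x y.
  set (v1 := mkV 0 0 1). set (v2 := mkV S3 0 C3). set (v3 := mkV x y C2).
  assert (m11 : mink v1 v1 = -1) by (unfold mink, v1; simpl; ring).
  assert (m22 : mink v2 v2 = -1) by (unfold mink, v2; simpl; lra).
  assert (m33 : mink v3 v3 = -1) by (unfold mink, v3; simpl; lra).
  assert (m12 : mink v1 v2 = - C3) by (unfold mink, v1, v2; simpl; ring).
  assert (m13 : mink v1 v3 = - C2) by (unfold mink, v1, v3; simpl; ring).
  assert (m23 : mink v2 v3 = - C1) by (unfold mink, v2, v3; simpl; lra).
  assert (hdet : det3 v1 v2 v3 = S3 * y) by (unfold det3, v1, v2, v3; simpl; ring).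
  exists v1, v2, v3. split; [|auto].
  unfold gtri, is_type, normed. repeat split; try lra.
  all: try (unfold trunc_ok; intros; lra).
  all: try (unfold v1, v2, v3; simpl; lra).
  - rewrite hdet. apply Rgt_not_eq. apply Rmult_lt_0_compat; lra.
  - apply edge_ok_11. lra.
  - apply edge_ok_11. lra.
  - apply edge_ok_11. lra.
Qed.

Lemma Mset_D p1 p2 p3 : PI / 2 <= p1 <= PI -> PI / 2 <= p2 <= PI -> PI / 2 <= p3 <= PI ->
  forall r1 r2 r3, Mset 1 1 p1 p2 p3 r1 r2 r3 <-> (0 < r1 /\ 0 < r2 /\ 0 < r3 /\ True).
Proof.
  intros h1 h2 h3 r1 r2 r3.
  assert (HJ : forall r, inJ (1 * 1) r <-> 0 < r).
  { intros r. unfold inJ. split; intros h. apply h. lra. intros; auto. }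
  split.
  - intros [j1 [j2 [j3 _]]]. apply (proj1 (HJ r1)) in j1. apply (proj1 (HJ r2)) in j2. apply (proj1 (HJ r3)) in j3. repeat split; auto.
  - intros [d1 [d2 [d3 _]]].
    destruct (suf_D r2 r3 p1 d2 d3 ltac:(lra) ltac:(lra)) as [l1 [t1 [a1 [b1 c1]]]].
    destruct (suf_D r1 r3 p2 d1 d3 ltac:(lra) ltac:(lra)) as [l2 [t2 [a2 [b2 c2]]]].
    destruct (suf_D r1 r2 p3 d1 d2 ltac:(lra) ltac:(lra)) as [l3 [t3 [a3 [b3 c3]]]].
    destruct (big_pt l1 l2 l3) as [v1 [v2 [v3 [G [e1 [e2 e3]]]]]]; try lra.
    split; [apply (proj2 (HJ _)); auto|]. split; [apply (proj2 (HJ _)); auto|]. split; [apply (proj2 (HJ _)); auto|].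
    exists l1, l2, l3. split; [auto|split; [auto|split; [auto|]]].
    exists v1, v2, v3. split; [exact G|].
    unfold gen_len. replace (- (1 * 1)) with (-1) by ring. rewrite !tau_m1. repeat split; try (intros; lra); lra.
Qed.

Lemma uimg_gen eps delta p1 p2 p3 (dom : R -> Prop) (G : R -> R) (P : R -> Prop)
  (C : R -> R -> R -> Prop) (Cy : R -> R -> R -> Prop) :
  (forall r1 r2 r3, Mset eps delta p1 p2 p3 r1 r2 r3 <-> dom r1 /\ dom r2 /\ dom r3 /\ C r1 r2 r3) ->
  (forall r1 r2 r3, dom r1 -> dom r2 -> dom r3 -> (C r1 r2 r3 <-> Cy (G r1) (G r2) (G r3))) ->
  (forall r y, dom r -> (u_coord eps delta r y <-> y = G r)) ->
  (forall y, P y <-> exists r, dom r /\ G r = y) ->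
  forall y, u_image eps delta p1 p2 p3 y <-> (P (vx y) /\ P (vy y) /\ P (vz y) /\ Cy (vx y) (vy y) (vz y)).
Proof.
  intros HM HC HU HP y. split.
  - intros [r1 [r2 [r3 [M [u1 [u2 u3]]]]]].
    apply HM in M. destruct M as [d1 [d2 [d3 c]]].
    apply (HU _ _ d1) in u1. apply (HU _ _ d2) in u2. apply (HU _ _ d3) in u3.
    rewrite u1, u2, u3. split; [apply HP; eauto|]. split; [apply HP; eauto|]. split; [apply HP; eauto|].
    apply HC; auto.
  - intros [P1 [P2 [P3 c]]].
    apply HP in P1. apply HP in P2. apply HP in P3.
    destruct P1 as [r1 [d1 g1]]. destruct P2 as [r2 [d2 g2]]. destruct P3 as [r3 [d3 g3]].
    exists r1, r2, r3. split.
    + apply HM. repeat split; auto. apply HC; auto. rewrite g1, g2, g3. auto.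
    + split; [apply HU; auto|]. split; apply HU; auto.
Qed.

Lemma Forall_nil_iff {A} (P : A -> Prop) : List.Forall P nil <-> True.
Proof. split; auto. Qed.

Definition e1 := mkV 1 0 0. Definition e2 := mkV 0 1 0. Definition e3 := mkV 0 0 1.

Definition hs_pair p1 p2 p3 : list (V3 * R) :=
  (mkV 0 (-1) (-1), p1) :: (mkV (-1) 0 (-1), p2) :: (mkV (-1) (-1) 0, p3) :: nil.
Definition hs_neg : list (V3 * R) := (e1, 0) :: (e2, 0) :: (e3, 0) :: nil.
Definition hs_low : list (V3 * R) :=
  (mkV (-1) 0 0, PI / 2) :: (mkV 0 (-1) 0, PI / 2) :: (mkV 0 0 (-1), PI / 2) :: nil.

Ltac forall_simp := repeat rewrite ?Forall_cons_iff, ?Forall_nil_iff, ?Forall_app; unfold dot3, e1, e2, e3; simpl.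

Theorem lemma4p2 (eps delta phi1 phi2 phi3 : R)
  (Htypes : is_type eps /\ is_type delta)
  (Hphi : inI delta phi1 /\ inI delta phi2 /\ inI delta phi3)
  (Hcase : eps = -1 \/
           (eps = 1 /\ delta = 1 /\
            PI / 2 <= phi1 /\ PI / 2 <= phi2 /\ PI / 2 <= phi3)) :
  open_convex_polyhedron (u_image eps delta phi1 phi2 phi3).
Proof.
  destruct Htypes as [He Hd]. destruct Hphi as [h1 [h2 h3]].
  destruct Hcase as [He1 | [He1 [Hd1 [q1 [q2 q3]]]]].
  - subst eps. destruct Hd as [Hd|[Hd|Hd]]; subst delta.
    +
      exists (hs_neg ++ hs_pair phi1 phi2 phi3). intros y.
      rewrite (uimg_gen (-1) (-1) phi1 phi2 phi3 (fun r => 0 < r) G1 (fun y => y < 0)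
        (fun r1 r2 r3 => 1 < DA r2 r3 phi1 /\ 1 < DA r1 r3 phi2 /\ 1 < DA r1 r2 phi3)
        (fun y1 y2 y3 => - phi1 < y2 + y3 /\ - phi2 < y1 + y3 /\ - phi3 < y1 + y2)).
      * unfold hs_neg, hs_pair. forall_simp. split; intros; repeat split; try tauto; lra.
      * apply Mset_A; auto.
      * intros r1 r2 r3 d1 d2 d3. destruct h1, h2, h3.
        rewrite !KA_iff by auto. tauto.
      * intros r y0 hr. unfold u_coord. replace (-1 * -1) with 1 by ring. apply uc1; auto.
      * apply range_G1.
    +
      exists (hs_neg ++ hs_pair phi1 phi2 phi3). intros y.
      rewrite (uimg_gen (-1) 0 phi1 phi2 phi3 (fun r => True) G0 (fun y => y < 0)
        (fun r1 r2 r3 => KB r2 r3 phi1 /\ KB r1 r3 phi2 /\ KB r1 r2 phi3)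
        (fun y1 y2 y3 => - phi1 < y2 + y3 /\ - phi2 < y1 + y3 /\ - phi3 < y1 + y2)).
      * unfold hs_neg, hs_pair. forall_simp. split; intros; repeat split; try tauto; lra.
      * apply Mset_B; auto.
      * intros r1 r2 r3 d1 d2 d3. rewrite !KB_iff. tauto.
      * intros r y0 hr. unfold u_coord. replace (-1 * 0) with 0 by ring. apply uc0.
      * apply range_G0.
    +
      exists (hs_low ++ hs_neg ++ hs_pair phi1 phi2 phi3). intros y.
      rewrite (uimg_gen (-1) 1 phi1 phi2 phi3 (fun r => 0 < r) Gm (fun y => - (PI / 2) < y < 0)
        (fun r1 r2 r3 => 1 < DC r2 r3 phi1 /\ 1 < DC r1 r3 phi2 /\ 1 < DC r1 r2 phi3)
        (fun y1 y2 y3 => - phi1 < y2 + y3 /\ - phi2 < y1 + y3 /\ - phi3 < y1 + y2)).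
      * unfold hs_low, hs_neg, hs_pair. forall_simp. split; intros; repeat split; try tauto; lra.
      * apply Mset_C; auto.
      * intros r1 r2 r3 d1 d2 d3. destruct h1 as [h1 h1'], h2 as [h2 h2'], h3 as [h3 h3'].
        rewrite !KC_iff by auto. tauto.
      * intros r y0 hr. unfold u_coord. replace (-1 * 1) with (-1) by ring. apply ucm.
      * apply range_Gm.
  - subst eps delta. destruct h1 as [h1 h1'], h2 as [h2 h2'], h3 as [h3 h3'].
    exists hs_neg. intros y.
    rewrite (uimg_gen 1 1 phi1 phi2 phi3 (fun r => 0 < r) G1 (fun y => y < 0)
      (fun r1 r2 r3 => True) (fun y1 y2 y3 => True)).
    + unfold hs_neg. forall_simp. split; intros; repeat split; try tauto; lra.
    + apply Mset_D; lra.
    + tauto.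
    + intros r y0 hr. unfold u_coord. replace (1 * 1) with 1 by ring. apply uc1; auto.
    + apply range_G1.
Qed.
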